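(* Let $M\ge1$, $\Delta x,\Delta y>0$, and consider the Cartesian cells $C_{j,k}=[x_{j-\frac12},x_{j+\frac12}]\times[y_{k-\frac12},y_{k+\frac12}]$ with centers $(x_j,y_k)=(j\Delta x,k\Delta y)$, $j,k\in\{-M,\dots,M\}$. Let $H:[0,\infty)\to\mathbb{R}$ be differentiable, $V:\mathbb{R}^2\to\mathbb{R}$, and $(W_{p,q})_{p,q\in\{-2M,\dots,2M\}}$ real numbers. Suppose cell averages $\overline\rho_{j,k}\ge0$ are given at time $t$, and define: \begin{itemize} \item slopes $(\rho_x)_{j,k},(\rho_y)_{j,k}$ and point values $\rho_{j,k}^{\rm E}=\overline\rho_{j,k}+\frac{\Delta x}{2}(\rho_x)_{j,k}$, $\rho_{j,k}^{\rm W}=\overline\rho_{j,k}-\frac{\Delta x}{2}(\rho_x)_{j,k}$, $\rho_{j,k}^{\rm N}=\overline\rho_{j,k}+\frac{\Delta y}{2}(\rho_y)_{j,k}$, $\rho_{j,k}^{\rm S}=\overline\rho_{j,k}-\frac{\Delta y}{2}(\rho_y)_{j,k}$, where the slopes are chosen so that all four point values are nonnegative; \item $\xi_{j,k}=\Delta x\Delta y\sum_{i,l}W_{j-i,k-l}\overline\rho_{i,l}+H'(\overline\rho_{j,k})+V(x_j,y_k)$; \item $u_{j+\frac12,k}=-\frac{\xi_{j+1,k}-\xi_{j,k}}{\Delta x}$, $v_{j,k+\frac12}=-\frac{\xi_{j,k+1}-\xi_{j,k}}{\Delta y}$, with positive parts $u^+=\max(u,0)$, $v^+=\max(v,0)$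 and negative parts $u^-=\min(u,0)$, $v^-=\min(v,0)$; \item $F^x_{j+\frac12,k}=u^+_{j+\frac12,k}\rho^{\rm E}_{j,k}+u^-_{j+\frac12,k}\rho^{\rm W}_{j+1,k}$ and $F^y_{j,k+\frac12}=v^+_{j,k+\frac12}\rho^{\rm N}_{j,k}+v^-_{j,k+\frac12}\rho^{\rm S}_{j,k+1}$ at interior interfaces, and $F^x_{\pm(M+\frac12),k}=F^y_{j,\pm(M+\frac12)}=0$. \end{itemize} Define the forward Euler update \[ \overline\rho_{j,k}(t+\Delta t)=\overline\rho_{j,k}-\frac{\Delta t}{\Delta x}\big(F^x_{j+\frac12,k}-F^x_{j-\frac12,k}\big)-\frac{\Delta t}{\Delta y}\big(F^y_{j,k+\frac12}-F^y_{j,k-\frac12}\big). \] If \[ \Delta t\le\min\Big\{\frac{\Delta x}{4a},\frac{\Delta y}{4b}\Big\},\quad a=\max_{j,k}\{u^+_{j+\frac12,k},-u^-_{j+\frac12,k}\},\quad b=\max_{j,k}\{v^+_{j,k+\frac12},-v^-_{j,k+\frac12}\}, \] then $\overline\rho_{j,k}(t+\Delta t)\ge0$ for all $j,k$. The same conclusion holds if the forward Euler step is replaced by a strong stability preserving Runge–Kutta step whose stages are convex combinations of forward Euler steps, each satisfying this CFL condition. Consequently, starting from nonnegative initial cell averages, all computed cell averages remain nonnegative.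
   Context: This is the two-dimensional semi-discrete finite-volume scheme $\frac{d\overline\rho_{j,k}}{dt}=-\frac{F^x_{j+\frac12,k}-F^x_{j-\frac12,k}}{\Delta x}-\frac{F^y_{j,k+\frac12}-F^y_{j,k-\frac12}}{\Delta y}$ for $\rho_t=\nabla\cdot[\rho\nabla(H'(\rho)+V(\mathbf{x})+W*\rho)]$ with $\rho_0\ge0$; $W_{p,q}$ approximates $W(p\Delta x,q\Delta y)$. In the paper the slopes are centered differences, replaced by generalized minmod-limited slopes where a point value would otherwise be negative. *)

(* Defs.v *)
From Stdlib Require Import Reals ZArith List.
From Coquelicot Require Import Coquelicot.
Open Scope R_scope.

(* Grid data: functions Z -> Z -> R, only the cells j,k in {-M..M} matter. *)
Definition grid (M : nat) : list Z :=
  map (fun n => (Z.of_nat n - Z.of_nat M)%Z) (seq 0 (2 * M + 1)).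
(* interior interfaces j+1/2 with j in {-M..M-1} *)
Definition ifaces (M : nat) : list Z :=
  map (fun n => (Z.of_nat n - Z.of_nat M)%Z) (seq 0 (2 * M)).

Definition inG (M : nat) (j : Z) : Prop := (- Z.of_nat M <= j <= Z.of_nat M)%Z.
Definition is_iface (M : nat) (j : Z) : bool :=
  andb (- Z.of_nat M <=? j)%Z (j <? Z.of_nat M)%Z.

Definition sumL (l : list Z) (f : Z -> R) : R := fold_right (fun z acc => f z + acc) 0 l.
Definition maxL (l : list Z) (f : Z -> R) : R := fold_right (fun z acc => Rmax (f z) acc) 0 l.
Definition sumN (n : nat) (f : nat -> R) : R := fold_right (fun l acc => f l + acc) 0 (seq 0 n).

Definition posp (x : R) : R := Rmax x 0.
Definition negp (x : R) : R := Rmin x 0.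

Definition deriv_on_nonneg (H dH : R -> R) : Prop :=
  (forall x, 0 < x -> is_derive H x (dH x)) /\
  filterlim (fun h => (H h - H 0) / h) (at_right 0) (locally (dH 0)).

Section Scheme.
Variables (M : nat) (dx dy : R) (W : Z -> Z -> R) (dH : R -> R) (V : R -> R -> R).

Definition xi (rho : Z -> Z -> R) (j k : Z) : R :=
  dx * dy * sumL (grid M) (fun i => sumL (grid M) (fun l => W (j - i)%Z (k - l)%Z * rho i l))
  + dH (rho j k) + V (IZR j * dx) (IZR k * dy).

Definition uvel rho j k : R := - (xi rho (j + 1)%Z k - xi rho j k) / dx.
Definition vvel rho j k : R := - (xi rho j (k + 1)%Z - xi rho j k) / dy.

Definition ptE (rho rx : Z -> Z -> R) j k := rho j k + dx / 2 * rx j k.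
Definition ptW (rho rx : Z -> Z -> R) j k := rho j k - dx / 2 * rx j k.
Definition ptN (rho ry : Z -> Z -> R) j k := rho j k + dy / 2 * ry j k.
Definition ptS (rho ry : Z -> Z -> R) j k := rho j k - dy / 2 * ry j k.

(* Fx j k = F^x_{j+1/2,k}, zero at the boundary interfaces +-(M+1/2) *)
Definition Fx (rho rx : Z -> Z -> R) j k : R :=
  if is_iface M j then posp (uvel rho j k) * ptE rho rx j k
                       + negp (uvel rho j k) * ptW rho rx (j + 1)%Z k
  else 0.
Definition Fy (rho ry : Z -> Z -> R) j k : R :=
  if is_iface M k then posp (vvel rho j k) * ptN rho ry j k
                       + negp (vvel rho j k) * ptS rho ry j (k + 1)%Z
  else 0.

Definition fe_step (rx ry : Z -> Z -> R) (dt : R) (rho : Z -> Z -> R) (j k : Z) : R :=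
  rho j k - dt / dx * (Fx rho rx j k - Fx rho rx (j - 1)%Z k)
          - dt / dy * (Fy rho ry j k - Fy rho ry j (k - 1)%Z).

Definition a_speed rho : R :=
  maxL (ifaces M) (fun j => maxL (grid M) (fun k =>
    Rmax (posp (uvel rho j k)) (- negp (uvel rho j k)))).
Definition b_speed rho : R :=
  maxL (grid M) (fun j => maxL (ifaces M) (fun k =>
    Rmax (posp (vvel rho j k)) (- negp (vvel rho j k)))).

(* dt <= min(dx/(4a), dy/(4b)), written without division (a or b may be 0) *)
Definition cfl rho dt : Prop := 4 * a_speed rho * dt <= dx /\ 4 * b_speed rho * dt <= dy.

Definition nonneg_grid (rho : Z -> Z -> R) : Prop :=
  forall j k, inG M j -> inG M k -> 0 <= rho j k.

Definition slopes_ok (rho rx ry : Z -> Z -> R) : Prop :=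
  forall j k, inG M j -> inG M k ->
    0 <= ptE rho rx j k /\ 0 <= ptW rho rx j k /\ 0 <= ptN rho ry j k /\ 0 <= ptS rho ry j k.

Definition limiter_ok (sx sy : (Z -> Z -> R) -> Z -> Z -> R) : Prop :=
  forall rho, nonneg_grid rho -> slopes_ok rho (sx rho) (sy rho).

(* An SSP Runge-Kutta step in Shu-Osher form: each stage is a convex
   combination of forward Euler steps applied to earlier stages, each
   forward Euler step (with its effective time step tau) satisfying the CFL
   condition for the stage it is applied to. *)
Definition ssp_rk_step (sx sy : (Z -> Z -> R) -> Z -> Z -> R)
    (rho rho' : Z -> Z -> R) : Prop :=
  exists (s : nat) (alpha tau : nat -> nat -> R) (stage : nat -> Z -> Z -> R),
    (forall j k, inG M j -> inG M k -> stage 0%nat j k = rho j k) /\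
    (forall i l, (1 <= i <= s)%nat -> (l < i)%nat ->
       0 <= alpha i l /\ 0 <= tau i l /\ cfl (stage l) (tau i l)) /\
    (forall i, (1 <= i <= s)%nat -> sumN i (fun l => alpha i l) = 1) /\
    (forall i j k, (1 <= i <= s)%nat -> inG M j -> inG M k ->
       stage i j k = sumN i (fun l =>
         alpha i l * fe_step (sx (stage l)) (sy (stage l)) (tau i l) (stage l) j k)) /\
    (forall j k, inG M j -> inG M k -> rho' j k = stage s j k).

End Scheme.

(* Main.v *)
Require Import Defs.
From Stdlib Require Import Reals ZArith List Lra Lia.
From Coquelicot Require Import Coquelicot.
Open Scope R_scope.

Lemma maxL_ge (l : list Z) f z : In z l -> f z <= maxL l f.
Proof.
  induction l as [|a l IH]; simpl; [tauto|].
  intros [->|H]; [apply Rmax_l|]. eapply Rle_trans; [apply IH, H| apply Rmax_r].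
Qed.

Lemma in_grid M j : inG M j -> In j (grid M).
Proof.
  unfold inG, grid; intros Hj. apply in_map_iff.
  exists (Z.to_nat (j + Z.of_nat M)). split; [lia|]. apply in_seq; lia.
Qed.

Lemma in_ifaces M j : is_iface M j = true -> In j (ifaces M).
Proof.
  unfold is_iface, ifaces; intros Hj. apply andb_prop in Hj as [H1 H2].
  apply Z.leb_le in H1; apply Z.ltb_lt in H2. apply in_map_iff.
  exists (Z.to_nat (j + Z.of_nat M)). split; [lia|]. apply in_seq; lia.
Qed.

Lemma iface_inG M j : is_iface M j = true -> inG M j /\ inG M (j+1).
Proof.
  unfold is_iface, inG; intros Hj. apply andb_prop in Hj as [H1 H2].
  apply Z.leb_le in H1; apply Z.ltb_lt in H2. lia.
Qed.

Lemma key dt dx c p : 0 < dx -> 0 <= dt -> 0 <= c -> 0 <= p -> 4 * c * dt <= dx ->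
  dt / dx * c * p <= p / 4.
Proof.
  intros Hdx Hdt Hc Hp H.
  assert (E : dt / dx * c * p = (c * dt) * p / dx) by (field; lra).
  rewrite E. apply Rmult_le_reg_r with dx; [lra|].
  replace (c * dt * p / dx * dx) with (c*dt*p) by (field; lra).
  assert (c*dt <= dx/4) by lra. nra.
Qed.

Lemma posp_ge x : 0 <= posp x. Proof. unfold posp; apply Rmax_r. Qed.
Lemma negp_le x : negp x <= 0. Proof. unfold negp; apply Rmin_r. Qed.

Lemma fe_nonneg M dx dy W dH V rho rx ry dt :
  0 < dx -> 0 < dy ->
  nonneg_grid M rho -> slopes_ok M dx dy rho rx ry -> 0 <= dt ->
  cfl M dx dy W dH V rho dt ->
  nonneg_grid M (fe_step M dx dy W dH V rx ry dt rho).
Proof.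
  intros Hdx Hdy Hnn Hsl Hdt [Ca Cb] j k Hj Hk.
  pose proof (Hsl j k Hj Hk) as (pE & pW & pN & pS).
  set (a := a_speed M dx dy W dH V rho) in *.
  set (b := b_speed M dx dy W dH V rho) in *.
  assert (Hu : forall j', is_iface M j' = true ->
    posp (uvel M dx dy W dH V rho j' k) <= a /\ - negp (uvel M dx dy W dH V rho j' k) <= a).
  { intros j' Hj'. unfold a, a_speed.
    set (g := fun j0 => maxL (grid M) (fun k0 => Rmax (posp (uvel M dx dy W dH V rho j0 k0))
        (- negp (uvel M dx dy W dH V rho j0 k0)))).
    assert (H1 : g j' <= maxL (ifaces M) g) by (apply maxL_ge, in_ifaces, Hj').
    assert (H2 : Rmax (posp (uvel M dx dy W dH V rho j' k)) (- negp (uvel M dx dy W dH V rho j' k)) <= g j').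
    { unfold g. apply (maxL_ge (grid M) (fun k0 => Rmax (posp (uvel M dx dy W dH V rho j' k0))
        (- negp (uvel M dx dy W dH V rho j' k0)))). apply in_grid, Hk. }
    pose proof (Rmax_l (posp (uvel M dx dy W dH V rho j' k)) (- negp (uvel M dx dy W dH V rho j' k))).
    pose proof (Rmax_r (posp (uvel M dx dy W dH V rho j' k)) (- negp (uvel M dx dy W dH V rho j' k))).
    split; lra. }
  assert (Hv : forall k', is_iface M k' = true ->
    posp (vvel M dx dy W dH V rho j k') <= b /\ - negp (vvel M dx dy W dH V rho j k') <= b).
  { intros k' Hk'. unfold b, b_speed.
    set (g := fun j0 => maxL (ifaces M) (fun k0 => Rmax (posp (vvel M dx dy W dH V rho j0 k0))
        (- negp (vvel M dx dy W dH V rho j0 k0)))).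
    assert (H1 : g j <= maxL (grid M) g) by (apply maxL_ge, in_grid, Hj).
    assert (H2 : Rmax (posp (vvel M dx dy W dH V rho j k')) (- negp (vvel M dx dy W dH V rho j k')) <= g j).
    { unfold g. apply (maxL_ge (ifaces M) (fun k0 => Rmax (posp (vvel M dx dy W dH V rho j k0))
        (- negp (vvel M dx dy W dH V rho j k0)))). apply in_ifaces, Hk'. }
    pose proof (Rmax_l (posp (vvel M dx dy W dH V rho j k')) (- negp (vvel M dx dy W dH V rho j k'))).
    pose proof (Rmax_r (posp (vvel M dx dy W dH V rho j k')) (- negp (vvel M dx dy W dH V rho j k'))).
    split; lra. }
  assert (Hlx : 0 <= dt / dx) by (unfold Rdiv; apply Rmult_le_pos; [lra| left; apply Rinv_0_lt_compat; lra]).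
  assert (Hly : 0 <= dt / dy) by (unfold Rdiv; apply Rmult_le_pos; [lra| left; apply Rinv_0_lt_compat; lra]).
  assert (A : dt / dx * Fx M dx dy W dH V rho rx j k <= ptE dx rho rx j k / 4).
  { unfold Fx. destruct (is_iface M j) eqn:E.
    - destruct (Hu j E) as [U1 U2]. destruct (iface_inG M j E) as [_ Hj1].
      destruct (Hsl (j+1)%Z k Hj1 Hk) as (_ & pW1 & _).
      pose proof (posp_ge (uvel M dx dy W dH V rho j k)).
      pose proof (negp_le (uvel M dx dy W dH V rho j k)).
      assert (K := key dt dx (posp (uvel M dx dy W dH V rho j k)) (ptE dx rho rx j k)
        Hdx Hdt ltac:(lra) pE ltac:(nra)).
      assert (0 <= dt/dx * (- negp (uvel M dx dy W dH V rho j k)) * ptW dx rho rx (j+1) k).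
      { apply Rmult_le_pos; [apply Rmult_le_pos|]; lra. }
      nra.
    - lra. }
  assert (B : - (ptW dx rho rx j k / 4) <= dt / dx * Fx M dx dy W dH V rho rx (j-1) k).
  { unfold Fx. destruct (is_iface M (j-1)) eqn:E.
    - destruct (Hu (j-1)%Z E) as [U1 U2]. destruct (iface_inG M (j-1) E) as [Hj0 _].
      destruct (Hsl (j-1)%Z k Hj0 Hk) as (pE0 & _).
      replace (j - 1 + 1)%Z with j by lia.
      pose proof (posp_ge (uvel M dx dy W dH V rho (j-1) k)).
      pose proof (negp_le (uvel M dx dy W dH V rho (j-1) k)).
      assert (K := key dt dx (- negp (uvel M dx dy W dH V rho (j-1) k)) (ptW dx rho rx j k)
        Hdx Hdt ltac:(lra) pW ltac:(nra)).
      assert (0 <= dt/dx * posp (uvel M dx dy W dH V rho (j-1) k) * ptE dx rho rx (j-1) k).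
      { apply Rmult_le_pos; [apply Rmult_le_pos|]; lra. }
      nra.
    - lra. }
  assert (C : dt / dy * Fy M dx dy W dH V rho ry j k <= ptN dy rho ry j k / 4).
  { unfold Fy. destruct (is_iface M k) eqn:E.
    - destruct (Hv k E) as [U1 U2]. destruct (iface_inG M k E) as [_ Hk1].
      destruct (Hsl j (k+1)%Z Hj Hk1) as (_ & _ & _ & pS1).
      pose proof (posp_ge (vvel M dx dy W dH V rho j k)).
      pose proof (negp_le (vvel M dx dy W dH V rho j k)).
      assert (K := key dt dy (posp (vvel M dx dy W dH V rho j k)) (ptN dy rho ry j k)
        Hdy Hdt ltac:(lra) pN ltac:(nra)).
      assert (0 <= dt/dy * (- negp (vvel M dx dy W dH V rho j k)) * ptS dy rho ry j (k+1)).
      { apply Rmult_le_pos; [apply Rmult_le_pos|]; lra. }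
      nra.
    - lra. }
  assert (D : - (ptS dy rho ry j k / 4) <= dt / dy * Fy M dx dy W dH V rho ry j (k-1)).
  { unfold Fy. destruct (is_iface M (k-1)) eqn:E.
    - destruct (Hv (k-1)%Z E) as [U1 U2]. destruct (iface_inG M (k-1) E) as [Hk0 _].
      destruct (Hsl j (k-1)%Z Hj Hk0) as (_ & _ & pN0 & _).
      replace (k - 1 + 1)%Z with k by lia.
      pose proof (posp_ge (vvel M dx dy W dH V rho j (k-1))).
      pose proof (negp_le (vvel M dx dy W dH V rho j (k-1))).
      assert (K := key dt dy (- negp (vvel M dx dy W dH V rho j (k-1))) (ptS dy rho ry j k)
        Hdy Hdt ltac:(lra) pS ltac:(nra)).
      assert (0 <= dt/dy * posp (vvel M dx dy W dH V rho j (k-1)) * ptN dy rho ry j (k-1)).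
      { apply Rmult_le_pos; [apply Rmult_le_pos|]; lra. }
      nra.
    - lra. }
  unfold fe_step. unfold ptE, ptW, ptN, ptS in *. lra.
Qed.

Lemma sumN_nonneg i f : (forall l, (l < i)%nat -> 0 <= f l) -> 0 <= sumN i f.
Proof.
  unfold sumN. intros H.
  assert (G : forall l, In l (seq 0 i) -> 0 <= f l) by (intros l Hl; apply H; apply in_seq in Hl; lia).
  clear H. induction (seq 0 i) as [|x s IH]; simpl; [lra|].
  assert (0 <= f x) by (apply G; left; auto).
  assert (0 <= fold_right (fun l acc => f l + acc) 0 s) by (apply IH; intros; apply G; right; auto).
  lra.
Qed.

Theorem theorem2p3 (M : nat) (dx dy : R) (H dH : R -> R) (V : R -> R -> R)
    (W : Z -> Z -> R) :
  (1 <= M)%nat -> 0 < dx -> 0 < dy -> deriv_on_nonneg H dH ->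
  (* forward Euler *)
  (forall (rho rx ry : Z -> Z -> R) (dt : R),
     nonneg_grid M rho -> slopes_ok M dx dy rho rx ry -> 0 < dt ->
     cfl M dx dy W dH V rho dt ->
     nonneg_grid M (fe_step M dx dy W dH V rx ry dt rho)) /\
  (* SSP Runge-Kutta step *)
  (forall sx sy, limiter_ok M dx dy sx sy ->
     forall rho rho', nonneg_grid M rho ->
       ssp_rk_step M dx dy W dH V sx sy rho rho' -> nonneg_grid M rho') /\
  (* all computed cell averages stay nonnegative *)
  (forall sx sy, limiter_ok M dx dy sx sy ->
     forall rhos : nat -> Z -> Z -> R, nonneg_grid M (rhos 0%nat) ->
       (forall n, ssp_rk_step M dx dy W dH V sx sy (rhos n) (rhos (S n))) ->
       forall n, nonneg_grid M (rhos n)).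
Proof.
  intros HM Hdx Hdy _.
  assert (SSP : forall sx sy, limiter_ok M dx dy sx sy ->
     forall rho rho', nonneg_grid M rho ->
       ssp_rk_step M dx dy W dH V sx sy rho rho' -> nonneg_grid M rho').
  { intros sx sy Hlim rho rho' Hr (s & alpha & tau & stage & H0 & Hat & Hsum & Hst & Hfin).
    assert (St : forall n i, (i <= n)%nat -> (i <= s)%nat -> nonneg_grid M (stage i)).
    { induction n as [|n IH]; intros i Hi Hs.
      - replace i with 0%nat by lia. intros j k Hj Hk. rewrite H0 by auto. apply Hr; auto.
      - destruct i as [|i]. { apply (IH 0%nat); lia. }
        intros j k Hj Hk. rewrite Hst by (auto; lia).
        apply sumN_nonneg. intros l Hl.
        destruct (Hat (S i) l ltac:(lia) Hl) as (Ha & Ht & Hc).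
        assert (Nl : nonneg_grid M (stage l)) by (apply (IH l); lia).
        apply Rmult_le_pos; [auto|].
        apply fe_nonneg with (W := W) (dH := dH) (V := V); auto. }
    intros j k Hj Hk. rewrite Hfin by auto. apply (St s s); auto. }
  split; [|split].
  - intros rho rx ry dt Hr Hs Hdt Hc. apply fe_nonneg; auto; lra.
  - exact SSP.
  - intros sx sy Hlim rhos H0 Hstep n. induction n as [|n IH]; auto.
    eapply SSP; eauto.
Qed.
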